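(* Let $q=p^n$ ($p$ any prime), $k\ge1$, $r=\gcd(k,q-1)$, $s=\gcd(k,q+1)$. Then, viewing $D_k$ as a map ${\mathbb F}_q\to{\mathbb F}_q$, $D_k({\mathbb F}_q)=\langle\mu_{(q-1)/r}\rangle\cup\langle\mu_{(q+1)/s}\rangle$.
   Context: $D_k\in\mathbb Z[x]$: $D_0=2$, $D_1=x$, $D_{k+2}=xD_{k+1}-D_k$ (so $D_k(u+1/u)=u^k+u^{-k}$). For $d$ not divisible by $p$, $\mu_d=\{a\in\overline{{\mathbb F}}_p^\times:a^d=1\}$ and $\langle\mu_d\rangle=\{a+1/a:a\in\mu_d\}$. *)

(* Defs.v *)
From HB Require Import structures.
From mathcomp Require Import all_boot all_order all_algebra.
Set Implicit Arguments. Unset Strict Implicit. Unset Printing Implicit Defensive.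
Import Order.TTheory GRing.Theory Num.Theory.
Local Open Scope ring_scope.

(* The pair (D_k, D_{k+1}) of Dickson polynomials in Z[x]:
   D_0 = 2, D_1 = x, D_{k+2} = x D_{k+1} - D_k. *)
Fixpoint dickson_pair (k : nat) : {poly int} * {poly int} :=
  match k with
  | 0%N => (2%:P, 'X)
  | k'.+1 => let (a, b) := dickson_pair k' in (b, 'X * b - a)
  end.

Definition dickson (k : nat) : {poly int} := (dickson_pair k).1.

Definition mu (K : fieldType) (d : nat) (a : K) : Prop := a ^+ d = 1.

Definition angle_mu (K : fieldType) (d : nat) (y : K) : Prop :=
  exists a : K, mu d a /\ y = a + a^-1.

(* F_q inside K (q a power of the characteristic): roots of X^q - X *)
Definition in_Fq (K : fieldType) (q : nat) (x : K) : Prop := x ^+ q = x.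

(* Main.v *)
Require Import Defs.
From HB Require Import structures.
From mathcomp Require Import all_boot all_order all_algebra.
From mathcomp Require Import ring.
Import GRing.Theory.
Local Open Scope ring_scope.

Lemma frobq (K : fieldType) (p : nat) (hc : p \in [pchar K]) (n : nat) (x y : K) :
  (x + y) ^+ (p ^ n) = x ^+ (p ^ n) + y ^+ (p ^ n).
Proof.
elim: n x y => [|n IH] x y; first by rewrite !expn0 !expr1.
rewrite expnS !exprM -!(pFrobenius_autE hc) pFrobenius_autD_comm //.
exact: mulrC.
Qed.

Lemma dickson_eval (K : fieldType) (u : K) : u != 0 -> forall k,
  (map_poly intr (dickson_pair k).1).[u + u^-1] = u ^+ k + u ^- k /\
  (map_poly intr (dickson_pair k).2).[u + u^-1] = u ^+ k.+1 + u ^- k.+1.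
Proof.
move=> u0; elim=> [|k IH] /=.
  rewrite map_polyC map_polyX !hornerE /= expr0 invr1 expr1; split=> //.
case: (dickson_pair k) IH => a b /= [Ha Hb]; split=> //.
rewrite rmorphB rmorphM /= map_polyX !hornerE Ha Hb.
rewrite -!exprVn !exprS.
set U := u ^+ k; set V := u^-1 ^+ k.
by field.
Qed.

Arguments dickson_eval {K u}.

Lemma nz_of_unit (K : fieldType) (x : K) N : (0 < N)%N -> x ^+ N = 1 -> x != 0.
Proof.
move=> N0 h; apply/negP => /eqP x0; move: h; rewrite x0 expr0n gtn_eqF //= mulr0n.
by move=> /eqP; rewrite eq_sym oner_eq0.
Qed.

Arguments nz_of_unit {K x N}.

Lemma root_lemma (K : closedFieldType) (N k : nat) (a : K) :
  (0 < N)%N -> (0 < k)%N -> a ^+ (N %/ gcdn k N) = 1 ->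
  exists u : K, u ^+ N = 1 /\ u ^+ k = a.
Proof.
move=> hN hk ha.
set g := gcdn k N in ha.
have g0 : (0 < g)%N by rewrite gcdn_gt0 hk.
set k' := (k %/ g)%N; set m := (N %/ g)%N in ha *.
have hkk : (k' * g)%N = k by rewrite divnK // dvdn_gcdl.
have hNN : (m * g)%N = N by rewrite divnK // dvdn_gcdr.
have m0 : (0 < m)%N by rewrite divn_gt0 // dvdn_leq // dvdn_gcdr.
have cop : gcdn k' m = 1%N.
  apply/eqP; rewrite -(eqn_pmul2r g0) muln_gcdl hkk hNN mul1n.
  done.
have anz : a != 0 := nz_of_unit m0 ha.
case: (Bezoutr k' m0) => b _; rewrite cop => /dvdnP [d hd].
have hX : (a ^+ b) ^+ k' = a^-1.
  apply: (mulfI anz); rewrite mulfV // -exprM -exprS -[(b * k').+1]/(1 + b * k')%N hd.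
  by rewrite mulnC exprM ha expr1n.
set c := (a ^+ b)^-1.
have hc1 : c ^+ k' = a by rewrite /c exprVn hX invrK.
have hc2 : c ^+ m = 1 by rewrite /c exprVn exprAC ha expr1n invr1.
have [u hu] := @solve_monicpoly K g (fun i => if i == 0%N then c else 0) g0.
have hug : u ^+ g = c.
  rewrite hu; move: g0; case: (g) => // g' _.
  rewrite big_ord_recl /= expr0 mulr1 big1 ?addr0 // => i _.
  by rewrite /= mul0r.
exists u; split.
  by rewrite -hNN mulnC exprM hug hc2.
by rewrite -hkk mulnC exprM hug hc1.
Qed.

Theorem proposition2p4 (K : closedFieldType) (p n k : nat)
    (hp : prime p) (hchar : p \in [pchar K]) (hn : (0 < n)%N) (hk : (0 < k)%N) :
  let q := (p ^ n)%N in
  let r := gcdn k q.-1 in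
  let s := gcdn k q.+1 in
  forall y : K,
    (exists x : K, in_Fq q x /\ y = (map_poly intr (dickson k)).[x]) <->
    (angle_mu (q.-1 %/ r) y \/ angle_mu (q.+1 %/ s) y).
Proof.
move=> q r s y.
have hq : (1 < q)%N by rewrite /q -{1}(expn0 p) ltn_exp2l ?prime_gt1.
have fr : forall u : K, u != 0 -> (u + u^-1) ^+ q = u ^+ q + (u ^+ q)^-1.
  by move=> u _; rewrite /q frobq // exprVn.
have mu_of : forall (u : K) N, u ^+ N = 1 -> mu (N %/ gcdn k N) (u ^+ k).
  move=> u N hu; rewrite /mu -exprM muln_divA ?dvdn_gcdr //.
  by rewrite -divn_mulAC ?dvdn_gcdl // mulnC exprM hu expr1n.
have eqm1 : q = (q.-1).+1 by rewrite prednK // ltnW.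
split.
  case=> x [hx ->].
  have [u hu] := @solve_monicpoly K 2 (fun i => if i == 0%N then -1 else x) isT.
  rewrite !big_ord_recl big_ord0 /= expr0 expr1 mulr1 addr0 in hu.
  have u0 : u != 0.
    apply/eqP=> u0; move: hu; rewrite u0 expr0n /= mulr0 addr0 => /eqP.
    by rewrite eq_sym oppr_eq0 oner_eq0.
  have hxu : x = u + u^-1.
    apply: (mulIf u0); rewrite mulrDl mulVf // -expr2 hu; ring.
  rewrite /dickson hxu; have [-> _] := dickson_eval u0 k.
  move: hx; rewrite /in_Fq hxu fr // => hx.
  set w := u ^+ q in hx.
  have w0 : w != 0 by rewrite expf_neq0.
  have : (w - u) * (w * u - 1) = 0.
    transitivity (w * u * ((w + w^-1) - (u + u^-1))); last by rewrite hx subrr mulr0.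
    by field; rewrite w0 u0.
  move/eqP; rewrite mulf_eq0 !subr_eq0 => /orP [/eqP hw|/eqP hw].
    left; exists (u ^+ k); split; last by [].
    apply: mu_of; apply: (mulIf u0); rewrite mul1r -exprSr -eqm1; exact: hw.
  right; exists (u ^+ k); split; last by [].
  by apply: mu_of; rewrite exprSr.
have hgen : forall N, (0 < N)%N -> (forall u : K, u ^+ N = 1 -> (u + u^-1) ^+ q = u + u^-1) ->
    angle_mu (N %/ gcdn k N) y -> exists x : K, in_Fq q x /\ y = (map_poly intr (dickson k)).[x].
  move=> N N0 hF [a [ha ->]].
  have [u [hu1 hu2]] := @root_lemma K N k a N0 hk ha.
  have u0 : u != 0 := nz_of_unit N0 hu1.
  exists (u + u^-1); split; first exact: hF.
  by rewrite /dickson; have [-> _] := dickson_eval u0 k; rewrite hu2.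
case=> H.
  apply: (hgen q.-1) => //; first by rewrite -ltnS -eqm1.
  move=> u hu; have u0 : u != 0 by apply: (nz_of_unit _ hu); rewrite -ltnS -eqm1.
  by rewrite fr // eqm1 exprSr hu mul1r.
apply: (hgen q.+1) => //.
move=> u hu; have u0 : u != 0 := nz_of_unit (ltn0Sn _) hu.
rewrite fr //.
have -> : u ^+ q = u^-1.
  by apply: (mulIf u0); rewrite mulVf // -exprSr.
by rewrite invrK addrC.
Qed.
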